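(* Let $A\in \mathbb{R}^{m\times n}$ with $A^{\dagger}\geq 0$. Let $A=P_{1}-R_{1}+S_{1}$ and $A=P_{2}-R_{2}+S_{2}$ be two weak regular proper double splittings of $A$. Define $$W_{1}=\begin{pmatrix} P_{1}^{\dagger}R_{1} & -P_{1}^{\dagger}S_{1}\\ I & 0\end{pmatrix},\qquad W_{2}=\begin{pmatrix} P_{2}^{\dagger}R_{2} & -P_{2}^{\dagger}S_{2}\\ I & 0\end{pmatrix}\in\mathbb{R}^{2n\times 2n},$$ where $I$ is the $n\times n$ identity matrix. If $P_{1}^{\dagger}A\geq P_{2}^{\dagger}A$ and at least one of the conditions (i) $P_{1}^{\dagger}R_{1}\geq P_{2}^{\dagger}R_{2}$, (ii) $P_{1}^{\dagger}S_{1}\geq P_{2}^{\dagger}S_{2}$ holds, then $\rho(W_{1})\leq \rho(W_{2})< 1$.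
   Context: $A^{\dagger}$ denotes the Moore–Penrose inverse of $A$. For real matrices, $B\geq 0$ means all entries of $B$ are nonnegative, and $B\geq C$ means $B-C\geq 0$. $\rho(\cdot)$ denotes the spectral radius. For $A\in\mathbb{R}^{m\times n}$, a decomposition $A=P-R+S$ with $P,R,S\in\mathbb{R}^{m\times n}$ is a proper double splitting if $\mathcal{R}(A)=\mathcal{R}(P)$ and $\mathcal{N}(A)=\mathcal{N}(P)$. A proper double splitting is called weak regular if $P^{\dagger}\geq 0$, $P^{\dagger}R\geq 0$ and $-P^{\dagger}S\geq 0$. *)

(* Defs.v *)
From HB Require Import structures.
From mathcomp Require Import all_boot all_order all_algebra.
From mathcomp Require Import complex.
Set Implicit Arguments. Unset Strict Implicit. Unset Printing Implicit Defensive.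
Import Order.TTheory GRing.Theory Num.Theory.
Local Open Scope ring_scope.
Local Open Scope complex_scope.

Definition is_MP_inverse (R : rcfType) (m n : nat)
    (A : 'M[R]_(m, n)) (X : 'M[R]_(n, m)) : Prop :=
  [/\ A *m X *m A = A, X *m A *m X = X,
      (A *m X)^T = A *m X & (X *m A)^T = X *m A].

Definition mx_nonneg (R : rcfType) (m n : nat) (B : 'M[R]_(m, n)) : Prop :=
  forall i j, 0 <= B i j.
Definition mx_ge (R : rcfType) (m n : nat) (B C : 'M[R]_(m, n)) : Prop :=
  mx_nonneg (B - C).

Definition same_range (R : rcfType) (m n : nat) (A P : 'M[R]_(m, n)) : Prop :=
  forall y : 'cV[R]_m, (exists x, y = A *m x) <-> (exists x, y = P *m x).
Definition same_null (R : rcfType) (m n : nat) (A P : 'M[R]_(m, n)) : Prop :=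
  forall x : 'cV[R]_n, A *m x = 0 <-> P *m x = 0.

Definition proper_double_splitting (R : rcfType) (m n : nat)
    (A P Rm S : 'M[R]_(m, n)) : Prop :=
  [/\ A = P - Rm + S, same_range A P & same_null A P].

Definition weak_regular_pds (R : rcfType) (m n : nat)
    (A P Rm S : 'M[R]_(m, n)) (Pd : 'M[R]_(n, m)) : Prop :=
  [/\ proper_double_splitting A P Rm S, is_MP_inverse P Pd,
      mx_nonneg Pd, mx_nonneg (Pd *m Rm) & mx_nonneg (- (Pd *m S))].

(* spectral radius: maximum modulus of the (complex) eigenvalues, i.e. of the
   roots of the characteristic polynomial over R[i] *)
Definition spectral_radius (R : rcfType) (n : nat) (A : 'M[R]_n) : R :=
  \big[Num.max/0]_(z <- sval (closed_field_poly_normal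
                      (char_poly (map_mx (fun x : R => x%:C) A)))) ComplexField.Normc.normc z.

Definition iter_mx (R : rcfType) (m n : nat)
    (Pd : 'M[R]_(n, m)) (Rm S : 'M[R]_(m, n)) : 'M[R]_(n + n) :=
  block_mx (Pd *m Rm) (- (Pd *m S)) 1%:M 0.

(* Main.v *)
Require Import Defs.
From HB Require Import structures.
From mathcomp Require Import all_boot all_order all_algebra.
From mathcomp Require Import complex polyrcf.
From mathcomp Require Import ring lra.
Import Order.TTheory GRing.Theory Num.Theory.
Local Open Scope ring_scope.
Set Implicit Arguments. Unset Strict Implicit. Unset Printing Implicit Defensive.
Import ComplexField.Normc.

Section Spec.
Variable R : rcfType.
Local Notation C := (R[i]).
Local Notation toC := (fun x : R => (x%:C)%C).

Lemma normc_ge0 (z : C) : 0 <= normc z.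
Proof. by case: z => a b; rewrite /normc sqrtr_ge0. Qed.

Lemma normc_real (x : R) : normc ((x%:C)%C) = `|x|.
Proof. by rewrite /normc /= expr0n /= addr0 sqrtr_sqr. Qed.

Lemma rho_ge0 n (M : 'M[R]_n) : 0 <= spectral_radius M.
Proof.
rewrite /spectral_radius; elim: (sval _) => [|z s IH]; first by rewrite big_nil.
by rewrite big_cons le_max IH orbT.
Qed.

Lemma rho_le n (M : 'M[R]_n) r : 0 <= r ->
  (forall z, root (char_poly (map_mx toC M)) z -> normc z <= r) ->
  spectral_radius M <= r.
Proof.
move=> r0 H; rewrite /spectral_radius.
case: closed_field_poly_normal => s /= Hs.
have Hin z : z \in s -> normc z <= r.
  move=> zs; apply: H; rewrite Hs rootZ; last first.
    by rewrite lead_coef_eq0 -size_poly_eq0 size_char_poly.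
  by rewrite root_prod_XsubC.
elim: s Hin {Hs} => [|z s IH] Hin; first by rewrite big_nil.
rewrite big_cons ge_max Hin ?mem_head //= IH // => y ys.
by apply: Hin; rewrite in_cons ys orbT.
Qed.

Lemma rho_root_ge n (M : 'M[R]_n) z : root (char_poly (map_mx toC M)) z ->
  normc z <= spectral_radius M.
Proof.
rewrite /spectral_radius; case: closed_field_poly_normal => s /= Hs.
rewrite {1}Hs rootZ; last by rewrite lead_coef_eq0 -size_poly_eq0 size_char_poly.
rewrite root_prod_XsubC.
elim: s {Hs} => [|y s IH] //; rewrite in_cons big_cons le_max.
by case/orP => [/eqP-> | /IH ->]; rewrite ?lexx ?orbT.
Qed.

Lemma char_poly_real_nonroot n (M : 'M[R]_n) t : spectral_radius M < t ->
  (char_poly M).[t] != 0.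
Proof.
move=> Ht; apply/negP => /eqP H0.
have : root (char_poly (map_mx toC M)) (t%:C)%C.
  rewrite -map_char_poly; apply/rootP.
  by rewrite horner_map /= H0.
move/rho_root_ge; rewrite normc_real.
have t0 : 0 <= t by apply: le_trans (ltW Ht); apply: rho_ge0.
by rewrite ger0_norm // leNgt Ht.
Qed.


Lemma exmax (I : finType) (i0 : I) (F : I -> R) :
  exists k, forall j, F j <= F k.
Proof.
case: (arg_maxP F (P:=xpredT) (i0:=i0) isT) => k _ H.
by exists k => j; apply: H.
Qed.
Lemma exmin (I : finType) (i0 : I) (F : I -> R) :
  exists k, forall j, F k <= F j.
Proof.
case: (arg_minP F (P:=xpredT) (i0:=i0) isT) => k _ H.
by exists k => j; apply: H.
Qed.

Lemma char_poly_tr (F : comNzRingType) n (A : 'M[F]_n) :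
  char_poly A^T = char_poly A.
Proof.
rewrite /char_poly -det_tr; congr (\det _).
by apply/matrixP => i j; rewrite !mxE eq_sym.
Qed.

Lemma normc_sum (I : finType) (f : I -> C) :
  normc (\sum_i f i) <= \sum_i normc (f i).
Proof.
apply: (big_ind2 (fun a b => normc a <= b)).
- by rewrite normc0.
- by move=> a b c d H1 H2; apply: le_trans (le_normcD _ _) _; apply: lerD.
- by [].
Qed.

Lemma eigvec_of_root n (M : 'M[C]_n) z : root (char_poly M) z ->
  exists2 w : 'cV[C]_n, M *m w = z *: w & w != 0.
Proof.
rewrite -char_poly_tr -eigenvalue_root_char => /eigenvalueP [v Hv v0].
exists v^T; last by rewrite trmx_eq0.
by rewrite -(trmxK M) -trmx_mul Hv linearZ.
Qed.

Lemma rho_bound N (M : 'M[R]_N) (x : 'cV[R]_N) r :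
  mx_nonneg M -> (forall i, 0 < x i 0) -> 0 <= r ->
  (forall i, (M *m x) i 0 <= r * x i 0) -> spectral_radius M <= r.
Proof.
move=> M0 x0 r0 Hx; apply: rho_le => // z /eigvec_of_root [w Hw w0].
have [i1 Hi1] : exists i, w i 0 != 0.
  apply/existsP; apply: contraNT w0 => /existsPn H.
  by apply/eqP/matrixP => i j; rewrite (ord1 j) mxE; apply/eqP/negbNE/H.
pose F i := normc (w i 0) / x i 0.
have [k Hk] := exmax i1 F.
have Hj j : normc (w j 0) <= F k * x j 0.
  by rewrite -ler_pdivrMr //; apply: Hk.
have nk : normc (w k 0) = F k * x k 0 by rewrite /F mulfVK // gt_eqF.
have Fk0 : 0 < F k.
  apply: lt_le_trans (Hk i1); rewrite /F divr_gt0 //.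
  by rewrite lt_def normc_ge0 andbT; apply: contra Hi1 => /eqP /eq0_normc ->.
have nk0 : 0 < normc (w k 0) by rewrite nk mulr_gt0.
have H1 : normc z * normc (w k 0) <= r * normc (w k 0).
  rewrite -normcM.
  have -> : z * w k 0 = (map_mx toC M *m w) k 0 by rewrite Hw mxE.
  rewrite mxE; apply: le_trans (normc_sum _) _.
  apply: le_trans (_ : \sum_j M k j * (F k * x j 0) <= _).
    apply: ler_sum => j _; rewrite mxE normcM normc_real ger0_norm //.
    by apply: ler_wpM2l.
  have -> : \sum_j M k j * (F k * x j 0) = F k * (M *m x) k 0.
    by rewrite mxE mulr_sumr; apply: eq_bigr => j _; rewrite mulrCA.
  rewrite nk mulrCA; apply: ler_wpM2l; [exact: ltW | exact: Hx].
by rewrite -(ler_pM2r nk0).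
Qed.


Section ML.
Variable N : nat.
Variable M : 'M[R]_N.
Hypothesis M0 : forall i j, 0 <= M i j.

Definition ee : 'cV[R]_N := const_mx 1.
Definition YY (t : R) : 'cV[R]_N := \adj (t%:M - M) *m ee.
Definition DD (t : R) : R := \det (t%:M - M).

Lemma YY_eq t i : t * YY t i 0 - (M *m YY t) i 0 = DD t.
Proof.
have H : (t%:M - M) *m YY t = DD t *: ee by rewrite /YY mulmxA mul_mx_adj mul_scalar_mx.
have := congr1 (fun X : 'cV[R]_N => X i 0) H; rewrite mulmxBl mul_scalar_mx !mxE => ->.
by rewrite mulr1.
Qed.

Lemma YY_pos t : 0 < t -> 0 < DD t -> (forall i, 0 <= YY t i 0) ->
  forall i, 0 < YY t i 0.
Proof.
move=> t0 D0 Y0 i; have := YY_eq t i; move/(congr1 (fun x => x + (M *m YY t) i 0)).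
rewrite subrK => E.
have : 0 < t * YY t i 0.
  rewrite E; apply: ltr_pwDl => //; rewrite mxE; apply: sumr_ge0 => j _.
  by apply: mulr_ge0.
by rewrite pmulr_rgt0.
Qed.

Lemma YY_nonneg t : 0 < DD t -> (forall i, \sum_j M i j < t) ->
  forall i, 0 <= YY t i 0.
Proof.
move=> D0 Ht i0; have [k Hk] := exmin i0 (fun i => YY t i 0).
suff : 0 <= YY t k 0 by move=> H; apply: le_trans H (Hk i0).
rewrite leNgt; apply/negP => Yk.
have := YY_eq t k => E.
have H1 : (\sum_j M k j) * YY t k 0 <= (M *m YY t) k 0.
  rewrite [X in _ <= X]mxE mulr_suml; apply: ler_sum => j _; exact: ler_wpM2l.
have H2 : t * YY t k 0 - (M *m YY t) k 0 <= t * YY t k 0 - (\sum_j M k j) * YY t k 0.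
  by rewrite lerD2l lerN2.
have H3 : t * YY t k 0 - (\sum_j M k j) * YY t k 0 < 0.
  by rewrite -mulrBl pmulr_rlt0 ?subr_gt0.
by move: (le_lt_trans H2 H3); rewrite E ltNge (ltW D0).
Qed.

Definition pp (i : 'I_N) : {poly R} := (\adj (char_poly_mx M) *m map_mx polyC ee) i 0.

Lemma char_mx_eval t : map_mx (horner_eval t) (char_poly_mx M) = t%:M - M.
Proof.
apply/matrixP => i j; by rewrite !mxE /horner_eval hornerD hornerN hornerMn hornerX hornerC.
Qed.

Lemma pp_eval t i : (pp i).[t] = YY t i 0.
Proof.
rewrite (_ : (pp i).[t] = (map_mx (horner_eval t) (\adj (char_poly_mx M) *m map_mx polyC ee)) i 0); last by rewrite mxE.
rewrite map_mxM map_mx_adj char_mx_eval /YY; congr ((_ *m _) i 0).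
by apply/matrixP => a b; rewrite !mxE; exact: (rmorph1 (horner_eval t)).
Qed.

Lemma DD_eval t : (char_poly M).[t] = DD t.
Proof.
by rewrite /char_poly -[LHS]/(horner_eval t _) -det_map_mx char_mx_eval.
Qed.

Lemma ML_main r : spectral_radius M < r ->
  exists y : 'cV[R]_N, (forall i, 0 < y i 0) /\ (forall i, (M *m y) i 0 <= r * y i 0).
Proof.
move=> Hr; have rho0 := rho_ge0 M.
have r0 : 0 < r by apply: le_lt_trans Hr.
have lc : 0 < lead_coef (char_poly M) by rewrite (monicP (char_poly_monic M)) ltr01.
have [n0 Hn0] := poly_pinfty_gt_lc lc.
rewrite (monicP (char_poly_monic M)) in Hn0.
pose S := \sum_i \sum_j M i j.
have S0 : 0 <= S by apply: sumr_ge0 => i _; apply: sumr_ge0 => j _; exact: M0.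
pose T := Num.max n0 (r + 1 + S).
have TS i : \sum_j M i j < T.
  apply: le_lt_trans (_ : S < T); last first.
    by rewrite lt_max; apply/orP; right; lra.
  rewrite /S [X in _ <= X](bigD1 i) //= lerDl; apply: sumr_ge0 => k _; apply: sumr_ge0 => j _; exact: M0.
have rT : r < T.
  by rewrite lt_max; apply/orP; right; lra.
have T0 : 0 < T by apply: lt_trans rT.
have DT : 1 <= DD T by rewrite -DD_eval; apply: Hn0; rewrite le_max lexx.
have DDpos t : r <= t -> t <= T -> 0 < DD t.
  move=> rt tT; rewrite ltNge; apply/negP => Dt.
  have Hs : (char_poly M).[t] * (char_poly M).[T] <= 0.
    by rewrite !DD_eval mulr_le0_ge0 // (le_trans ler01 DT).
  have [x Hx rx] := polyrcf.poly_ivt tT Hs.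
  move: Hx; rewrite in_itv /= => /andP [tx xT].
  have : spectral_radius M < x by apply: lt_le_trans Hr (le_trans rt tx).
  by move/char_poly_real_nonroot; rewrite -rootE rx.
have YT i : 0 < YY T i 0.
  apply: YY_pos => //; first exact: DDpos (ltW rT) (lexx T).
  by apply: YY_nonneg => //; exact: DDpos (ltW rT) (lexx T).
pose q := \prod_i pp i.
have NR a : r <= a -> a <= T -> (forall x, a < x -> x < T -> ~~ root q x) ->
    forall i, 0 < YY a i 0.
  move=> ra aT Hno; have a0 : 0 < a by apply: lt_le_trans ra.
  apply: YY_pos => //; first exact: DDpos.
  move=> i; rewrite leNgt; apply/negP => neg.
  have Hs : (pp i).[a] * (pp i).[T] <= 0 by rewrite !pp_eval pmulr_lle0 // ltW.
  have [x Hx rx] := polyrcf.poly_ivt aT Hs.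
  move: Hx; rewrite in_itv /= => /andP [ax xT].
  have xa : x != a by apply: contraTneq rx => ->; rewrite rootE pp_eval lt_eqF.
  have xT' : x != T by apply: contraTneq rx => ->; rewrite rootE pp_eval gt_eqF.
  have h1 : a < x by rewrite lt_def xa ax.
  have h2 : x < T by rewrite lt_def eq_sym xT' xT.
  have := Hno x h1 h2.
  by rewrite rootE horner_prod (bigD1 i) //= (rootP rx) mul0r eqxx.
suff Hno : forall x, r < x -> x < T -> ~~ root q x.
  exists (YY r); split; first exact: NR (lexx r) (ltW rT) Hno.
  move=> i; have := YY_eq r i; have := DDpos r (lexx r) (ltW rT).
  by move=> D0 E; rewrite -subr_ge0 E ltW.
have q0 : q != 0.
  apply/eqP => q0; have : q.[T] = 0 by rewrite q0 horner0.
  rewrite horner_prod => /eqP; rewrite prodf_seq_eq0 => /hasP [i _ /=].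
  by rewrite pp_eval gt_eqF.
case: (prev_rootP q (r - 1) T) => [/eqP|y _ qy Hy Hno|c _ _ Hno]; first by rewrite (negPf q0).
- have [ry|yr] := leP r y.
    move: Hy; rewrite in_itv /= => /andP [_ yT].
    have Hno' : forall x, y < x -> x < T -> ~~ root q x.
      by move=> x h1 h2; apply: Hno; rewrite in_itv /= h1 h2.
    have Hpos := NR y ry (ltW yT) Hno'.
    move: qy; rewrite horner_prod => /eqP; rewrite prodf_seq_eq0 => /hasP [i _ /=].
    by rewrite pp_eval gt_eqF.
  move=> x rx xT; apply: Hno; rewrite in_itv /= xT andbT; exact: lt_trans rx.
- move=> x rx xT; apply: Hno; rewrite in_itv /= xT andbT.
  by apply: lt_trans rx; rewrite ltrBlDr ltrDl ltr01.
Qed.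
End ML.
End Spec.

Section Blocks.
Variable R : rcfType.

Lemma block_nonneg n (B C : 'M[R]_n) : mx_nonneg B -> mx_nonneg C ->
  mx_nonneg (block_mx B C 1%:M 0).
Proof.
move=> B0 C0 i j.
case: (split_ordP i) => i' ->; case: (split_ordP j) => j' ->.
- by rewrite block_mxEul.
- by rewrite block_mxEur.
- by rewrite block_mxEdl mxE ler0n.
- by rewrite block_mxEdr mxE.
Qed.

Lemma block_mul_u n (B C : 'M[R]_n) (x1 x2 : 'cV[R]_n) i :
  (block_mx B C 1%:M 0 *m col_mx x1 x2) (lshift n i) 0 = (B *m x1 + C *m x2) i 0.
Proof. by rewrite mul_block_col col_mxEu. Qed.

Lemma block_mul_d n (B C : 'M[R]_n) (x1 x2 : 'cV[R]_n) i :
  (block_mx B C 1%:M 0 *m col_mx x1 x2) (rshift n i) 0 = x1 i 0.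
Proof. by rewrite mul_block_col col_mxEd mul1mx mul0mx addr0. Qed.

Lemma rho_iter_bound n (B C : 'M[R]_n) (x : 'cV[R]_n) r :
  mx_nonneg B -> mx_nonneg C -> 0 < r -> (forall i, 0 < x i 0) ->
  (forall i, ((B + r^-1 *: C) *m x) i 0 <= r * x i 0) ->
  spectral_radius (block_mx B C 1%:M 0) <= r.
Proof.
move=> B0 C0 r0 x0 Hx.
apply: (@rho_bound R _ _ (col_mx x (r^-1 *: x))) => //.
- exact: block_nonneg.
- move=> i; case: (split_ordP i) => i' ->; rewrite ?col_mxEu ?col_mxEd //.
  by rewrite mxE mulr_gt0 // invr_gt0.
- exact: ltW.
- move=> i; case: (split_ordP i) => i' ->.
    by rewrite block_mul_u col_mxEu -scalemxAr scalemxAl -mulmxDl; exact: Hx.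
  by rewrite block_mul_d col_mxEd mxE mulrA mulfV ?gt_eqF // mul1r.
Qed.

Lemma mx_le_mulr m n (X Y : 'M[R]_(m, n)) (v : 'cV[R]_n) i :
  (forall i j, X i j <= Y i j) -> (forall j, 0 <= v j 0) ->
  (X *m v) i 0 <= (Y *m v) i 0.
Proof.
by move=> H v0; rewrite !mxE; apply: ler_sum => j _; apply: ler_wpM2r.
Qed.

Lemma mx_le_mull m n (X : 'M[R]_(m, n)) (v w : 'cV[R]_n) i :
  mx_nonneg X -> (forall j, v j 0 <= w j 0) ->
  (X *m v) i 0 <= (X *m w) i 0.
Proof.
by move=> H v0; rewrite !mxE; apply: ler_sum => j _; apply: ler_wpM2l.
Qed.

End Blocks.

Section MP.
Variable R : rcfType.

Lemma Qfix m n (A : 'M[R]_(m, n)) Ad (Q : 'M[R]_n) :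
  is_MP_inverse A Ad -> Q^T = Q -> A *m Q = A -> Q *m Ad = Ad.
Proof.
case=> h1 h2 h3 h4 hQ hAQ.
have E : Ad = A^T *m (Ad^T *m Ad).
  by rewrite -{1}h2 -h4 trmx_mul mulmxA.
rewrite E mulmxA; congr (_ *m _).
by rewrite -[Q]hQ -trmx_mul hAQ.
Qed.

Lemma QfixL m n (P : 'M[R]_(m, n)) Pd (Q : 'M[R]_m) :
  is_MP_inverse P Pd -> Q^T = Q -> Q *m P = P -> Pd *m Q = Pd.
Proof.
case=> h1 h2 h3 h4 hQ hQP.
have E : Pd = (Pd *m Pd^T) *m P^T.
  by rewrite -{1}h2 -mulmxA -h3 trmx_mul mulmxA.
rewrite E -mulmxA; congr (_ *m _).
by rewrite -[Q]hQ -trmx_mul hQP.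
Qed.

Lemma col_mul m n k (A : 'M[R]_(m, n)) (B : 'M[R]_(n, k)) j :
  col j (A *m B) = A *m col j B.
Proof. by rewrite !colE mulmxA. Qed.

Lemma null_tr m n (A P : 'M[R]_(m, n)) k (X : 'M[R]_(n, k)) :
  same_null A P -> P *m X = 0 -> A *m X = 0.
Proof.
move=> H PX; apply/matrixP => i j.
have : P *m col j X = 0 by rewrite -col_mul PX; apply/matrixP => a b; rewrite !mxE.
move/(H (col j X))/(congr1 (fun Y : 'cV[R]_m => Y i 0)).
by rewrite -col_mul !mxE.
Qed.

Lemma same_null_sym m n (A P : 'M[R]_(m, n)) : same_null A P -> same_null P A.
Proof. by move=> H x; split => /H. Qed.

Lemma range_tr m n (A P : 'M[R]_(m, n)) Ad :
  same_range A P -> A *m Ad *m A = A -> A *m Ad *m P = P.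
Proof.
move=> H hA; apply/matrixP => i j.
have [y Hy] : exists y, col j P = A *m y.
  by apply/H; exists (col j 1%:M); rewrite -col_mul mulmx1.
have := congr1 (fun Y : 'cV[R]_m => A *m Ad *m Y) Hy => /=.
rewrite -col_mul mulmxA hA -Hy => /(congr1 (fun Y : 'cV[R]_m => Y i 0)).
by rewrite !mxE.
Qed.

Lemma AQ m n (A P : 'M[R]_(m, n)) Pd :
  same_null A P -> is_MP_inverse P Pd -> A *m (Pd *m P) = A.
Proof.
move=> H [h1 h2 h3 h4].
suff : A *m (1%:M - Pd *m P) = 0.
  by rewrite mulmxBr mulmx1 => /eqP; rewrite subr_eq0 => /eqP <-.
by apply: (null_tr H); rewrite mulmxBr mulmx1 mulmxA h1 subrr.
Qed.

Lemma Qeq m n (A P : 'M[R]_(m, n)) Ad Pd :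
  is_MP_inverse A Ad -> is_MP_inverse P Pd -> same_null A P ->
  Pd *m P = Ad *m A.
Proof.
move=> hA hP hN.
have b : Pd *m P *m Ad = Ad.
  by apply: (Qfix hA); [case: hP | exact: AQ hN hP].
have a : Ad *m A *m Pd = Pd.
  by apply: (Qfix hP); [case: hA | exact: AQ (same_null_sym hN) hA].
have e1 : Pd *m P = Ad *m A *m (Pd *m P) by rewrite mulmxA a.
have e2 : Ad *m A = Pd *m P *m (Ad *m A) by rewrite mulmxA b.
have e3 : Ad *m A = Ad *m A *m (Pd *m P).
  case: hA => _ _ _ hA4; case: hP => _ _ _ hP4.
  have := congr1 trmx e2; rewrite [RHS]trmx_mul !hA4 hP4; exact.
by rewrite e1 -e3.
Qed.

Lemma PdAAd m n (A P : 'M[R]_(m, n)) Ad Pd :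
  is_MP_inverse A Ad -> is_MP_inverse P Pd -> same_range A P ->
  Pd *m A *m Ad = Pd.
Proof.
move=> hA hP hR; rewrite -mulmxA; apply: (QfixL hP); first by case: hA.
by apply: range_tr hR _; case: hA.
Qed.

End MP.

Section Split.
Variable R : rcfType.
Lemma aux (b c u r th : R) : 0 <= b -> 0 <= c -> 0 < r -> r <= 1 -> 0 <= u ->
  b + c <= th * u -> th <= r * r -> b + r^-1 * c <= r * u.
Proof.
move=> b0 c0 r0 r1 u0 H1 H2.
rewrite -(ler_pM2l r0) mulrDr mulrA mulfV ?gt_eqF // mul1r.
nra.
Qed.
Lemma aux2 (th : R) : 0 <= th -> th < 1 -> th <= ((1 + th)/2) * ((1 + th) / 2).
Proof. move=> h1 h2. nra. Qed.
Lemma aux3 (b1 c1 b2 c2 s : R) : 1 <= s -> b1 + c1 <= b2 + c2 -> c1 <= c2 ->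
  b1 + s * c1 <= b2 + s * c2.
Proof. move=> *; nra. Qed.

Lemma eadd k (X Y : 'cV[R]_k) i : (X + Y) i 0 = X i 0 + Y i 0.
Proof. by rewrite mxE. Qed.
Lemma escale k a (X : 'cV[R]_k) i : (a *: X) i 0 = a * X i 0.
Proof. by rewrite mxE. Qed.
Lemma eopp k (X : 'cV[R]_k) i : (- X) i 0 = - X i 0.
Proof. by rewrite mxE. Qed.

Lemma term_le_sum k (f : 'I_k -> R) j : (forall i, 0 <= f i) -> f j <= \sum_i f i.
Proof.
by move=> H; rewrite (bigD1 j) //= lerDl; apply: sumr_ge0 => i _.
Qed.

Lemma nonneg_mul k l (X : 'M[R]_(k, l)) (v : 'cV[R]_l) i :
  mx_nonneg X -> (forall j, 0 <= v j 0) -> 0 <= (X *m v) i 0.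
Proof. by move=> H1 H2; rewrite mxE; apply: sumr_ge0 => j _; apply: mulr_ge0. Qed.

Lemma BC_eq m n (A P Rm S : 'M[R]_(m, n)) (Pd : 'M[R]_(n, m)) :
  A = P - Rm + S -> Pd *m Rm + - (Pd *m S) = Pd *m (P - A).
Proof.
move=> eA; have -> : P - A = Rm - S by rewrite eA !opprD opprK !addrA subrr add0r.
by rewrite mulmxBr.
Qed.

Lemma G1 m n (A P Rm S : 'M[R]_(m, n)) Ad Pd :
  is_MP_inverse A Ad -> mx_nonneg Ad -> weak_regular_pds A P Rm S Pd ->
  spectral_radius (iter_mx Pd Rm S) < 1.
Proof.
move=> hA Ad0 [[eA hR hN] hP Pd0 B0 C0].
have hQ := Qeq hA hP hN; have hI2 := PdAAd hA hP hR.
have hT := BC_eq Pd eA.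
pose e : 'cV[R]_m := const_mx 1.
pose en : 'cV[R]_n := const_mx 1.
pose v := (P - A) *m en.
pose K := \sum_k `|v k 0|.
have K0 : 0 <= K by apply: sumr_ge0 => k _.
pose et := (1 + K)^-1.
have eta0 : 0 < et by rewrite invr_gt0; lra.
have etaK : et * K <= 1.
  by rewrite mulrC ler_pdivrMr ?mul1r; lra.
pose u := Ad *m e + et *: en.
have Ade i : 0 <= (Ad *m e) i 0.
  by apply: nonneg_mul => // j; rewrite mxE.
have ui i : u i 0 = (Ad *m e) i 0 + et by rewrite eadd escale [en _ _]mxE mulr1.
have ueta i : et <= u i 0 by rewrite ui lerDr.
have u0 i : 0 < u i 0 by apply: lt_le_trans (ueta i).
have E : (Pd *m Rm + - (Pd *m S)) *m u = Ad *m e - Pd *m e + et *: (Pd *m v).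
  rewrite hT /u mulmxDr -scalemxAr; congr (_ + _); last by rewrite /v mulmxA.
  rewrite mulmxA mulmxBr mulmxBl hQ hI2; case: hA => _ -> _ _.
  by rewrite mulmxBl.
have Tu i : (Pd *m Rm *m u) i 0 + (- (Pd *m S) *m u) i 0 <= (Ad *m e) i 0.
  rewrite -eadd -mulmxDl E eadd eadd eopp escale.
  suff : et * (Pd *m v) i 0 <= (Pd *m e) i 0 by lra.
  rewrite !mxE mulr_sumr; apply: ler_sum => k _; rewrite mulrCA.
  rewrite [e k 0]mxE; apply: ler_wpM2l => //.
  apply: le_trans etaK; apply: ler_wpM2l; first exact: ltW.
  apply: le_trans (ler_norm _) _; rewrite /K.
  by apply: (term_le_sum (f := fun k => `|v k 0|)) => j.
pose U := 1 + \sum_i u i 0.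
have uU i : u i 0 <= U.
  apply: le_trans (_ : \sum_i u i 0 <= U); last by rewrite /U lerDr.
  by apply: (term_le_sum (f := fun i => u i 0)) => j; apply: ltW.
have U1 : 1 <= U by rewrite /U lerDl; apply: sumr_ge0 => j _; apply: ltW.
have U0 : 0 < U by lra.
pose th := 1 - et / U.
have etaU : et / U <= 1.
  rewrite ler_pdivrMr // mul1r; apply: (le_trans _ U1).
  have h1K : 0 < 1 + K by lra.
  by rewrite /et (invf_le1 h1K); lra.
have etaU0 : 0 < et / U by rewrite divr_gt0.
have th0 : 0 <= th by rewrite /th; lra.
have th1 : th < 1 by rewrite /th; lra.
have thu i : u i 0 - et <= th * u i 0.
  rewrite /th mulrBl mul1r lerD2l lerN2 mulrAC ler_pdivrMr // mulrC.
  by rewrite mulrC; apply: ler_wpM2l; [exact: ltW | exact: uU].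
pose r := (1 + th) / 2.
have r0 : 0 < r by rewrite /r; lra.
have r1 : r < 1 by rewrite /r; lra.
apply: le_lt_trans r1; apply: rho_iter_bound => //.
move=> i; rewrite mulmxDl -scalemxAl eadd escale.
apply: (@aux _ _ _ _ (r * r)) => //.
- by apply: nonneg_mul => // j; exact: ltW.
- by apply: nonneg_mul => // j; exact: ltW.
- by rewrite /r; lra.
- exact: ltW (u0 i).
- apply: le_trans (Tu i) _; apply: (@le_trans _ _ (th * u i 0)).
    rewrite -[X in X <= _](addrK et) -ui; exact: thu.
  by apply: ler_wpM2r; [exact: ltW | exact: aux2].
Qed.
End Split.

Section Final.
Variable R : rcfType.
Lemma madd k l (X Y : 'M[R]_(k, l)) i j : (X + Y) i j = X i j + Y i j.
Proof. by rewrite mxE. Qed.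
Lemma mopp k l (X : 'M[R]_(k, l)) i j : (- X) i j = - X i j.
Proof. by rewrite mxE. Qed.
Lemma mscale k l a (X : 'M[R]_(k, l)) i j : (a *: X) i j = a * X i j.
Proof. by rewrite mxE. Qed.
End Final.

Unset Implicit Arguments.
Set Strict Implicit.

Theorem theorem3p8 (R : rcfType) (m n : nat)
    (A P1 R1 S1 P2 R2 S2 : 'M[R]_(m, n)) (Ad P1d P2d : 'M[R]_(n, m)) :
  is_MP_inverse A Ad -> mx_nonneg Ad ->
  weak_regular_pds A P1 R1 S1 P1d ->
  weak_regular_pds A P2 R2 S2 P2d ->
  mx_ge (P1d *m A) (P2d *m A) ->
  (mx_ge (P1d *m R1) (P2d *m R2) \/ mx_ge (P1d *m S1) (P2d *m S2)) ->
  spectral_radius (iter_mx P1d R1 S1) <= spectral_radius (iter_mx P2d R2 S2)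
  /\ spectral_radius (iter_mx P2d R2 S2) < 1.
Proof.
move=> hA Ad0 H1 H2 Hge Hor.
have G2lt := G1 hA Ad0 H2.
split => //.
move: H1 H2 => [[eA1 hR1 hN1] hP1 Pd10 B10 C10] [[eA2 hR2 hN2] hP2 Pd20 B20 C20].
have hT1 := BC_eq P1d eA1; have hT2 := BC_eq P2d eA2.
have sumle i j : (P1d *m R1) i j + (- (P1d *m S1)) i j <=
                 (P2d *m R2) i j + (- (P2d *m S2)) i j.
  rewrite -!madd hT1 hT2 !mulmxBr (Qeq hA hP1 hN1) (Qeq hA hP2 hN2) !madd !mopp.
  have := Hge i j; rewrite madd mopp; lra.
have Cle i j : (- (P1d *m S1)) i j <= (- (P2d *m S2)) i j.
  case: Hor => H.
    have := H i j; have := sumle i j; rewrite !madd !mopp; lra.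
  by have := H i j; rewrite !madd !mopp; lra.
rewrite /iter_mx.
set B1 := P1d *m R1; set C1 := - (P1d *m S1).
set B2 := P2d *m R2; set C2 := - (P2d *m S2).
set rho1 := spectral_radius (block_mx B1 C1 _ _).
set rho2 := spectral_radius (block_mx B2 C2 _ _).
rewrite leNgt; apply/negP => Hlt.
have rho20 : 0 <= rho2 by apply: rho_ge0.
have hm1 : Num.min rho1 1 <= 1 by rewrite ge_min lexx orbT.
have hm2 : Num.min rho1 1 <= rho1 by rewrite ge_min lexx.
have hm3 : rho2 < Num.min rho1 1 by rewrite lt_min Hlt.
pose r := (rho2 + Num.min rho1 1) / 2.
have r0 : 0 < r by rewrite /r; lra.
have r1 : r <= 1 by rewrite /r; lra.
have r2 : rho2 < r by rewrite /r; lra.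
have r3 : r < rho1 by rewrite /r; lra.
have W0 := block_nonneg B20 C20.
have [y [ypos Hy]] := ML_main W0 r2.
pose x1 := usubmx y; pose x2 := dsubmx y.
have ey : y = col_mx x1 x2 by rewrite vsubmxK.
have x1pos i : 0 < x1 i 0 by rewrite mxE.
have x2pos i : 0 < x2 i 0 by rewrite mxE.
have Hu i : (B2 *m x1 + C2 *m x2) i 0 <= r * x1 i 0.
  by have := Hy (lshift n i); rewrite ey block_mul_u col_mxEu.
have Hd i : x1 i 0 <= r * x2 i 0.
  by have := Hy (rshift n i); rewrite ey block_mul_d col_mxEd.
suff : rho1 <= r by rewrite leNgt r3.
apply: rho_iter_bound => //.
move=> i.
apply: le_trans (Hu i).
apply: le_trans (_ : ((B2 + r^-1 *: C2) *m x1) i 0 <= _).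
  apply: mx_le_mulr; last by move=> j; exact: ltW.
  move=> a b; rewrite !madd !mscale; apply: aux3 => //.
  by rewrite invf_ge1.
rewrite mulmxDl -scalemxAl !eadd escale lerD2l mulrC ler_pdivrMr // mulrC.
rewrite -escale scalemxAr.
by apply: mx_le_mull => // j; rewrite escale.
Qed.
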